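(* Let the Algorithm and assumptions (A1)–(A4) be as in the context, with constants $L_H,K_H,\delta_g,\delta_H,\nu$. Suppose the algorithm does not terminate at the $N$-th iteration, and that for every iteration $k$ the parameters satisfy $\delta_g\le\frac{9\delta_H^2}{4\sigma_k}$ and \[ \delta_H\le\min\Big\{\min\{\tfrac1{18},\tfrac{1-\rho_{TH}}{9}\}\big(\sqrt{K_H^2+4\sigma_k\varepsilon_g}-K_H\big),\ \min\{\tfrac19,\tfrac{2(1-\rho_{TH})}{9}\}\nu\varepsilon_H\Big\}. \] Then $\sigma_k\le\max\{\sigma_0,2\gamma L_H\}$ for all $k=1,2,\dots,N$.
   Context: Let $\mathcal M$ be a connected complete Riemannian manifold; $\langle\cdot,\cdot\rangle$ and $\|\cdot\|$ denote the inner product and norm on tangent spaces $T_x\mathcal M$. Let $f=\frac1n\sum_{i=1}^n f_i$ with each $f_i:\mathcal M\to\mathbb R$ twice continuously differentiable; $\mathrm{grad} f$ is the Riemannian gradient. A retraction is a smooth map $R:T\mathcal M\to\mathcal M$ whose restriction $R_x$ to $T_x\mathcal M$ satisfies $R_x(0_x)=x$, $DR_x(0_x)=\mathrm{Id}$. $\nabla^2 f\circ R_x(0_x)$ is the Hessian at $0_x$ of $f\circ R_x$ on the inner-product space $T_x\mathcal M$ (a self-adjoint operator). $\lambda_{\min}(H)$ denotes the smallest eigenvalue of a self-adjoint operator $H$. Algorithm: fix $\varepsilon_g,\varepsilon_H,\rho_{TH}\in(0,1)$, $\gamma>1$, $x_0\in\mathcal M$, $\sigma_0>0$. At iteration $k$: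 construct $G_k\in T_{x_k}\mathcal M$ and self-adjoint linear $H_k$ on $T_{x_k}\mathcal M$; if $\|G_k\|\le\varepsilon_g$ and $\lambda_{\min}(H_k)\ge-\varepsilon_H$, stop (terminate at iteration $k$); otherwise choose $\eta_k\in T_{x_k}\mathcal M$ approximately minimizing $m_k(\eta):=\langle G_k,\eta\rangle+\frac12\langle H_k[\eta],\eta\rangle+\frac13\sigma_k\|\eta\|^3$, set $\rho_k=\frac{f(x_k)-f\circ R_{x_k}(\eta_k)}{-m_k(\eta_k)}$; if $\rho_k\ge\rho_{TH}$ set $x_{k+1}=R_{x_k}(\eta_k)$, $\sigma_{k+1}=\sigma_k/\gamma$, else $x_{k+1}=x_k$, $\sigma_{k+1}=\gamma\sigma_k$. Cauchy point and eigenpoint: $\eta_k^C:=-\alpha^C G_k$ with $\alpha^C\in\arg\min_{\alpha\ge0}m_k(-\alpha G_k)$. Fix $\nu\in(0,1)$. When $\lambda_{\min}(H_k)<0$, $\eta_k^E:=\alpha^E u_k$ where $u_k$ satisfies $\langle u_k,H_k[u_k]\rangle\le\nu\lambda_{\min}(H_k)\|u_k\|^2<0$ and $\langle G_k,u_k\rangle\le0$, and $\alpha^E\in\arg\min_{\alpha\ge0}m_k(\alpha u_k)$. Assumptions: (A1) there is $L_H>0$ with $\big|f\circ R_{x_k}(\eta_k)-f(x_k)-\langle\mathrm{grad} f(x_k),\eta_k\rangle-\frac12\langle\nabla^2 f\circ R_{x_k}(0_{x_k})[\eta_k],\eta_k\rangle\big|\le\frac12L_H\|\eta_k\|^3$ for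 all $k$. (A2) there is $K_H>0$ with $\|H_k\|:=\sup_{\|\eta\|\le1}\langle\eta,H_k[\eta]\rangle\le K_H$ for all $k$. (A3) there are $\delta_g,\delta_H\in(0,1)$ with $\|G_k-\mathrm{grad} f(x_k)\|\le\delta_g$ and $\|(H_k-\nabla^2 f\circ R_{x_k}(0_{x_k}))[\eta_k]\|\le\delta_H\|\eta_k\|$ for all $k$. (A4) for all $k$, $-m_k(\eta_k)\ge-m_k(\eta_k^C)$, and $-m_k(\eta_k)\ge-m_k(\eta_k^E)$ whenever $\lambda_{\min}(H_k)<0$. *)

(* Defs.v *)
From HB Require Import structures.
From mathcomp Require Import all_boot all_order all_algebra.
From mathcomp Require Import all_classical all_reals all_analysis.
Set Implicit Arguments. Unset Strict Implicit. Unset Printing Implicit Defensive.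
Import Order.TTheory GRing.Theory Num.Theory.
Import numFieldNormedType.Exports.
Local Open Scope ring_scope.

(* Tangent spaces T_x M are modelled in orthonormal coordinates as 'rV[R]_d
   with the Euclidean inner product. *)
Definition dotv (R : realType) (d : nat) (u v : 'rV[R]_d) : R := (u *m v^T) 0 0.
Definition normv (R : realType) (d : nat) (u : 'rV[R]_d) : R := Num.sqrt (dotv u u).

Definition is_lambda_min (R : realType) (d : nat) (A : 'M[R]_d) (l : R) : Prop :=
  eigenvalue A l /\ forall a, eigenvalue A a -> l <= a.

(* Cubic model m_k(eta) = <G,eta> + 1/2 <H[eta],eta> + 1/3 sigma ||eta||^3,
   where H[eta] = eta *m H (row-vector convention). *)
Definition cubic_model (R : realType) (d : nat) (G : 'rV[R]_d) (H : 'M[R]_d)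
  (s : R) (e : 'rV[R]_d) : R :=
  dotv G e + 2^-1 * dotv (e *m H) e + 3^-1 * s * normv e ^+ 3.

Definition is_argmin_nonneg (R : realType) (phi : R -> R) (a : R) : Prop :=
  0 <= a /\ forall b, 0 <= b -> phi a <= phi b.

Definition avg_fun (R : realType) (M : Type) (n : nat) (fs : 'I_n -> M -> R)
  (y : M) : R := n%:R^-1 * \sum_(i < n) fs i y.

Definition ev (R : realType) (d : nat) (i : 'I_d) : 'rV[R]_d := delta_mx 0 i.

Definition coord_grad (R : realType) (d : nat) (g : 'rV[R]_d -> R) : 'rV[R]_d :=
  \row_i derive g 0 (ev R i).

Definition coord_hess (R : realType) (d : nat) (g : 'rV[R]_d -> R) : 'M[R]_d :=
  \matrix_(i, j) derive (fun p => derive g p (ev R j)) 0 (ev R i).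

Definition C2 (R : realType) (d : nat) (g : 'rV[R]_d -> R) : Prop :=
  (forall p v, derivable g p v) /\
  (forall p v w, derivable (fun q => derive g q w) p v) /\
  (forall v w, continuous (fun q => derive (fun r => derive g r w) q v)).

Definition rgrad (R : realType) (d : nat) (M : Type) (f : M -> R)
  (retr : M -> 'rV[R]_d -> M) (y : M) : 'rV[R]_d :=
  coord_grad (fun v => f (retr y v)).
Definition rhess (R : realType) (d : nat) (M : Type) (f : M -> R)
  (retr : M -> 'rV[R]_d -> M) (y : M) : 'M[R]_d :=
  coord_hess (fun v => f (retr y v)).

(* Main.v *)
Require Import Defs.
From HB Require Import structures.
From mathcomp Require Import all_boot all_order all_algebra.
From mathcomp Require Import all_classical all_reals all_analysis.
From mathcomp Require Import ring lra.
Import Order.TTheory GRing.Theory Num.Theory.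
Import numFieldNormedType.Exports.
Local Open Scope ring_scope.
Set Implicit Arguments. Unset Strict Implicit.
Section S.
Variable R : realType.
Variable d : nat.
Implicit Types u v w : 'rV[R]_d.
Lemma dotvE u v : dotv u v = \sum_j u 0 j * v 0 j.
Proof. by rewrite /dotv !mxE; apply: eq_bigr => j _; rewrite mxE. Qed.
Lemma dotvC u v : dotv u v = dotv v u.
Proof. by rewrite !dotvE; apply: eq_bigr => j _; rewrite mulrC. Qed.
Lemma dotvDl u v w : dotv (u + v) w = dotv u w + dotv v w.
Proof. by rewrite !dotvE -big_split; apply: eq_bigr => j _; rewrite mxE mulrDl. Qed.
Lemma dotvZl (c : R) u v : dotv (c *: u) v = c * dotv u v.
Proof. by rewrite !dotvE mulr_sumr; apply: eq_bigr => j _; rewrite mxE mulrA. Qed.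
Lemma dotvNl u v : dotv (- u) v = - dotv u v.
Proof. by rewrite -scaleN1r dotvZl mulN1r. Qed.
Lemma dotvBl u v w : dotv (u - v) w = dotv u w - dotv v w.
Proof. by rewrite dotvDl dotvNl. Qed.
Lemma dotvZr (c : R) u v : dotv u (c *: v) = c * dotv u v.
Proof. by rewrite dotvC dotvZl dotvC. Qed.
Lemma dotvNr u v : dotv u (- v) = - dotv u v.
Proof. by rewrite dotvC dotvNl dotvC. Qed.
Lemma dotv_ge0 u : 0 <= dotv u u.
Proof. by rewrite dotvE; apply: sumr_ge0 => j _; rewrite -expr2 sqr_ge0. Qed.
Lemma normv_ge0 u : 0 <= normv u.
Proof. exact: sqrtr_ge0. Qed.
Lemma normv_sqr u : normv u ^+ 2 = dotv u u.
Proof. by rewrite /normv sqr_sqrtr // dotv_ge0. Qed.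
Lemma normvZ (c : R) u : normv (c *: u) = `|c| * normv u.
Proof. by rewrite /normv dotvZl dotvZr mulrA -expr2 sqrtrM ?sqr_ge0 // sqrtr_sqr. Qed.
Lemma normvN u : normv (- u) = normv u.
Proof. by rewrite -scaleN1r normvZ normrN normr1 mul1r. Qed.
Lemma key_ineq u v (t : R) : 0 <= dotv u u - 2 * t * dotv u v + t ^+ 2 * dotv v v.
Proof.
have := dotv_ge0 (u - t *: v).
rewrite !dotvBl !dotvZl !(dotvC _ (u - _)) !dotvBl !dotvZl (dotvC v u).
by congr (_ <= _); ring.
Qed.
Lemma CS0 u v : normv v = 0 -> dotv u v = 0.
Proof.
move=> v0; have hv := normv_sqr v; rewrite v0 expr0n /= in hv.
have [b0|bn] := eqVneq (dotv u v) 0 => //.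
have := key_ineq u v ((dotv u u + 1) / (2 * dotv u v)).
rewrite -hv mulr0 addr0.
have -> : dotv u u - 2 * ((dotv u u + 1) / (2 * dotv u v)) * dotv u v = -1.
  by field.
by rewrite oppr_ge0 ler10.
Qed.
Lemma CS u v : dotv u v <= normv u * normv v.
Proof.
have nu := normv_ge0 u; have nv := normv_ge0 v.
have [v0|vpos] := eqVneq (normv v) 0.
  by rewrite CS0 // v0 mulr0.
have [u0|up] := eqVneq (normv u) 0.
  by rewrite dotvC CS0 // u0 mul0r.
have vp : 0 < normv v by rewrite lt_def vpos nv.
have upp : 0 < normv u by rewrite lt_def up nu.
have := key_ineq u v (normv u / normv v).
rewrite -!normv_sqr => h.
have : 0 <= normv v * (normv u ^+ 2 - 2 * (normv u / normv v) * dotv u v +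
    (normv u / normv v) ^+ 2 * normv v ^+ 2) by apply: mulr_ge0 => //; exact: ltW.
have -> : normv v * (normv u ^+ 2 - 2 * (normv u / normv v) * dotv u v +
    (normv u / normv v) ^+ 2 * normv v ^+ 2) = 2 * normv u * (normv u * normv v - dotv u v).
  by field; rewrite gt_eqF.
nra.
Qed.
End S.

Lemma cubic_bd (R : realType) (t : R) : 0 <= t -> 27 * t + 6 * t ^+ 2 - t ^+ 3 <= 192.
Proof.
move=> t0; have [t3|t3] := lerP t 3.
  have h1 : t ^+ 2 <= 9 by nra.
  have h2 : 0 <= t ^+ 3 by rewrite exprn_ge0.
  lra.
have h : 0 <= (t - 6) ^+ 2 * (t + 6) by apply: mulr_ge0; [exact: sqr_ge0| lra].
have -> : 27 * t + 6 * t ^+ 2 - t ^+ 3 = 192 - (t - 6) ^+ 2 * (t + 6) - (9 * t - 24) by ring.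
lra.
Qed.
Lemma err_bd (R : realType) (s L dg dH r : R) : 0 < s -> 0 < dH -> 0 <= r ->
  dg <= 9 * dH ^+ 2 / (4 * s) -> 2 * L <= s ->
  dg * r + 2^-1 * dH * r ^+ 2 + (2^-1 * L - 3^-1 * s) * r ^+ 3 <= 16 * dH ^+ 3 / s ^+ 2.
Proof.
move=> s0 h0 r0 hg hL.
have r3 : 0 <= r ^+ 3 by rewrite exprn_ge0.
have e1 : dg * r <= 9 * dH ^+ 2 / (4 * s) * r by rewrite ler_wpM2r.
have e2 : (2^-1 * L - 3^-1 * s) * r ^+ 3 <= - (12^-1 * s) * r ^+ 3 by rewrite ler_wpM2r //; lra.
set t := s * r / dH.
have ht := @cubic_bd R t (divr_ge0 (mulr_ge0 (ltW s0) r0) (ltW h0)) : 27 * t + 6 * t ^+ 2 - t ^+ 3 <= 192.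
have eq : 9 * dH ^+ 2 / (4 * s) * r + 2^-1 * dH * r ^+ 2 - (12^-1 * s) * r ^+ 3
   = dH ^+ 3 / s ^+ 2 / 12 * (27 * t + 6 * t ^+ 2 - t ^+ 3).
  by rewrite /t; field; rewrite !gt_eqF.
have p : 0 <= dH ^+ 3 / s ^+ 2 / 12.
  by apply: divr_ge0 => //; apply: divr_ge0; rewrite exprn_ge0 // ltW.
have : dH ^+ 3 / s ^+ 2 / 12 * (27 * t + 6 * t ^+ 2 - t ^+ 3) <= dH ^+ 3 / s ^+ 2 / 12 * 192.
  by rewrite ler_wpM2l.
have -> : dH ^+ 3 / s ^+ 2 / 12 * 192 = 16 * dH ^+ 3 / s ^+ 2 by field; rewrite gt_eqF.
lra.
Qed.
Section A.
Variable R : realType.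
Lemma core (s dH rho Df m P E : R) :
  rho < 1 -> Df - m <= E -> E <= 16 * dH ^+ 3 / s ^+ 2 ->
  P <= - m -> 0 < P -> 16 * dH ^+ 3 / s ^+ 2 <= (1 - rho) * P ->
  0 < - m /\ rho * (- m) <= - Df.
Proof.
move=> r1 hE hE2 hP P0 hd; split; first lra.
have : (1 - rho) * P <= (1 - rho) * (- m) by rewrite ler_wpM2l // subr_ge0 ltW.
have -> : rho * (- m) = - m - (1 - rho) * (- m) by ring.
lra.
Qed.

Lemma qprops (s K eps : R) : 0 < s -> 0 < K -> 0 < eps ->
  0 <= Num.sqrt (K ^+ 2 + 4 * s * eps) - K /\
  (Num.sqrt (K ^+ 2 + 4 * s * eps) - K) ^+ 2 + 2 * K * (Num.sqrt (K ^+ 2 + 4 * s * eps) - K) = 4 * s * eps.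
Proof.
move=> s0 K0 e0; set q := Num.sqrt _ - K.
have p4 : 0 <= 4 * s * eps by rewrite mulr_ge0 ?mulr_ge0 // ltW.
have hpos : 0 <= K ^+ 2 + 4 * s * eps by rewrite addr_ge0 // sqr_ge0.
split.
  have hK : Num.sqrt (K ^+ 2) = K by rewrite sqrtr_sqr ger0_norm // ltW.
  rewrite /q subr_ge0 -{1}hK ler_sqrt //.
  lra.
have : (q + K) ^+ 2 = K ^+ 2 + 4 * s * eps by rewrite /q subrK sqr_sqrtr.
move=> h; rewrite -[RHS](addKr (K ^+ 2)) -h; ring.
Qed.

Lemma case1_model (s K eps g q : R) : 0 < s -> 0 < K -> 0 < eps -> eps <= g ->
  0 <= q -> q ^+ 2 + 2 * K * q = 4 * s * eps ->
  - (q / (2 * s)) * g + 2^-1 * K * (q / (2 * s)) ^+ 2 + 3^-1 * s * (q / (2 * s)) ^+ 3 <= - (q * eps / (4 * s)).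
Proof.
move=> s0 K0 e0 eg q0 hq.
set beta := q / (2 * s).
have key : 3 * K * q + q ^+ 2 <= 6 * s * eps.
  have : 0 <= q ^+ 2 by exact: sqr_ge0.
  lra.
have eq : - beta * g + 2^-1 * K * beta ^+ 2 + 3^-1 * s * beta ^+ 3 =
   (- 12 * s * q * g + q * (3 * K * q + q ^+ 2)) / (24 * s ^+ 2).
  by rewrite /beta; field; rewrite gt_eqF.
rewrite eq ler_pdivrMr; last by rewrite mulr_gt0 // exprn_gt0.
have -> : - (q * eps / (4 * s)) * (24 * s ^+ 2) = - 6 * s * q * eps.
  by field; rewrite gt_eqF.
have h1 : q * (3 * K * q + q ^+ 2) <= q * (6 * s * eps) by rewrite ler_wpM2l.
have h2 : s * q * eps <= s * q * g by rewrite ler_wpM2l // mulr_ge0 // ltW.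
lra.
Qed.

Lemma case1_delta (s K eps rho dH q : R) : 0 < s -> 0 < K -> 0 < eps -> 0 < rho < 1 -> 0 < dH ->
  0 <= q -> q ^+ 2 + 2 * K * q = 4 * s * eps ->
  dH <= Num.min (18^-1) ((1 - rho) / 9) * q ->
  16 * dH ^+ 3 / s ^+ 2 <= (1 - rho) * (q * eps / (4 * s)).
Proof.
move=> s0 K0 e0 /andP[r0 r1] h0 q0 hq hd.
have q2 : q ^+ 2 <= 4 * s * eps by nra.
set c := Num.min (18^-1) ((1 - rho) / 9) in hd.
have c1 : c <= 18^-1 by rewrite /c ge_min lexx.
have c2 : c <= (1 - rho) / 9 by rewrite /c ge_min lexx orbT.
have c0 : 0 <= c by rewrite /c le_min; apply/andP; split; lra.
have d3 : dH ^+ 3 <= (c * q) ^+ 3 by rewrite lerXn2r // ?nnegrE ?mulr_ge0 // ltW.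
have cq3 : (c * q) ^+ 3 <= (18^-1) ^+ 2 * ((1 - rho) / 9) * (q * (4 * s * eps)).
  rewrite exprMn.
  have hc3 : c ^+ 3 <= (18^-1) ^+ 2 * ((1 - rho) / 9).
    rewrite [c ^+ 3]exprS mulrC.
    apply: ler_pM => //; [exact: exprn_ge0| apply: lerXn2r => //; rewrite nnegrE //; lra].
  have hq3 : q ^+ 3 <= q * (4 * s * eps) by rewrite exprS ler_wpM2l.
  apply: ler_pM => //; exact: exprn_ge0.
rewrite ler_pdivrMr; last by rewrite exprn_gt0.
have -> : (1 - rho) * (q * eps / (4 * s)) * s ^+ 2 = (1 - rho) * s * q * eps / 4.
  by field; rewrite gt_eqF.
have : 0 <= (1 - rho) * s * q * eps by rewrite !mulr_ge0 // ?ltW //; lra.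
lra.
Qed.

Lemma case2_delta (s mu nu epsH rho dH : R) : 0 < s -> 0 < rho < 1 -> 0 < dH ->
  0 <= nu * epsH -> nu * epsH <= mu ->
  dH <= Num.min (9^-1) (2 * (1 - rho) / 9) * nu * epsH ->
  16 * dH ^+ 3 / s ^+ 2 <= (1 - rho) * (mu ^+ 3 / (6 * s ^+ 2)).
Proof.
move=> s0 /andP[r0 r1] h0 ne nm hd.
set c := Num.min (9^-1) (2 * (1 - rho) / 9) in hd.
have c1 : c <= 9^-1 by rewrite /c ge_min lexx.
have c2 : c <= 2 * (1 - rho) / 9 by rewrite /c ge_min lexx orbT.
have c0 : 0 <= c by rewrite /c le_min; apply/andP; split; lra.
have hd' : dH <= c * mu.
  rewrite -mulrA in hd; apply: (le_trans hd); rewrite ler_wpM2l //.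
have mu0 : 0 <= mu by lra.
have d3 : dH ^+ 3 <= (c * mu) ^+ 3 by rewrite lerXn2r // ?nnegrE ?mulr_ge0 // ltW.
have hc3 : c ^+ 3 <= (9^-1) ^+ 2 * (2 * (1 - rho) / 9).
  rewrite [c ^+ 3]exprS mulrC.
  apply: ler_pM => //; [exact: exprn_ge0| apply: lerXn2r => //; rewrite nnegrE //; lra].
have m3 : 0 <= mu ^+ 3 by exact: exprn_ge0.
have : (c * mu) ^+ 3 <= (9^-1) ^+ 2 * (2 * (1 - rho) / 9) * mu ^+ 3.
  by rewrite exprMn ler_wpM2r.
rewrite ler_pdivrMr; last by rewrite exprn_gt0.
have -> : (1 - rho) * (mu ^+ 3 / (6 * s ^+ 2)) * s ^+ 2 = (1 - rho) * mu ^+ 3 / 6.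
  by field; rewrite gt_eqF // exprn_gt0.
have : 0 <= (1 - rho) * mu ^+ 3 by rewrite mulr_ge0 //; lra.
lra.
Qed.
End A.

Section M.
Variable R : realType.
Variable d : nat.
Implicit Types u v w G : 'rV[R]_d.

Lemma model_scale G (H : 'M[R]_d) s (a : R) u :
  cubic_model G H s (a *: u) = a * dotv G u + 2^-1 * (a * (a * dotv (u *m H) u))
    + 3^-1 * s * (`|a| * normv u) ^+ 3.
Proof. by rewrite /cubic_model normvZ dotvZr -scalemxAl dotvZl dotvZr. Qed.

Lemma err_mat G gr eta (H Hs : 'M[R]_d) s L dg dH (fR fx : R) :
  `|fR - fx - dotv gr eta - 2^-1 * dotv (eta *m Hs) eta| <= 2^-1 * L * normv eta ^+ 3 ->
  normv (G - gr) <= dg -> normv (eta *m (H - Hs)) <= dH * normv eta ->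
  fR - fx - cubic_model G H s eta <=
    dg * normv eta + 2^-1 * dH * normv eta ^+ 2 + (2^-1 * L - 3^-1 * s) * normv eta ^+ 3.
Proof.
move=> hA hg hH.
rewrite mulmxBr in hH.
have X := le_trans (ler_norm _) hA.
have r0 := normv_ge0 eta.
have c1 := CS (- (G - gr)) eta.
rewrite normvN dotvNl dotvBl in c1.
have c1' : normv (G - gr) * normv eta <= dg * normv eta by rewrite ler_wpM2r.
have c2 := CS (- (eta *m (H - Hs))) eta.
rewrite normvN dotvNl mulmxBr dotvBl in c2.
have c2' : normv (eta *m H - eta *m Hs) * normv eta <= dH * normv eta * normv eta by rewrite ler_wpM2r.
rewrite /cubic_model.
rewrite -mulrA -expr2 in c2'.
lra.
Qed.

Lemma cauchy_mat G (H : 'M[R]_d) s K eps q : 0 < s -> 0 < K -> 0 < eps -> eps <= normv G ->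
  0 <= q -> q ^+ 2 + 2 * K * q = 4 * s * eps ->
  (forall e, normv e <= 1 -> dotv e (e *m H) <= K) ->
  0 <= q / (2 * s) / normv G /\
  cubic_model G H s (- ((q / (2 * s) / normv G) *: G)) <= - (q * eps / (4 * s)).
Proof.
move=> s0 K0 e0 eg q0 hq hA2.
set g := normv G.
have g0 : 0 < g := lt_le_trans e0 eg.
set a := q / (2 * s) / g.
have a0 : 0 <= a by rewrite /a !divr_ge0 // ?ltW // mulr_gt0.
split => //.
have hD : dotv (G *m H) G <= K * g ^+ 2.
  have ne : normv (g^-1 *: G) <= 1.
    rewrite normvZ ger0_norm; last by rewrite invr_ge0 ltW.
    by rewrite mulVf // gt_eqF.
  have := hA2 _ ne.
  rewrite -scalemxAl dotvZl dotvZr dotvC => h.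
  have -> : dotv (G *m H) G = g ^+ 2 * (g^-1 * (g^-1 * dotv (G *m H) G)) by field; rewrite gt_eqF.
  by rewrite mulrC ler_wpM2r // sqr_ge0.
rewrite -scaleNr model_scale normrN ger0_norm // -normv_sqr -/g.
have s2 : 2 * s != 0 by rewrite mulf_neq0 // gt_eqF.
have gn : g != 0 by rewrite gt_eqF.
have sn : s != 0 by rewrite gt_eqF.
have e1 : a * g = q / (2 * s) by rewrite /a; field; rewrite sn gn.
have h1 : - a * (- a * dotv (G *m H) G) <= a * (a * (K * g ^+ 2)).
  by rewrite mulNr mulNr mulrN opprK ler_wpM2l // ler_wpM2l.
have e2 : a * (a * (K * g ^+ 2)) = K * (q / (2 * s)) ^+ 2 by rewrite /a; field; rewrite ?sn ?gn.
have e3 : - a * g ^+ 2 = - (q / (2 * s)) * g by rewrite /a; field; rewrite ?sn ?gn.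
rewrite e1 e3.
have h1' : 2^-1 * (- a * (- a * dotv (G *m H) G)) <= 2^-1 * K * (q / (2 * s)) ^+ 2.
  by rewrite -mulrA -e2 ler_wpM2l.
have := case1_model s0 K0 e0 eg q0 hq.
rewrite -/g => hh; lra.
Qed.

Lemma eig_mat G (H : 'M[R]_d) u s mu : 0 < s -> 0 < mu ->
  dotv u (u *m H) <= - mu * normv u ^+ 2 -> 0 < normv u -> dotv G u <= 0 ->
  cubic_model G H s ((mu / (s * normv u)) *: u) <= - (mu ^+ 3 / (6 * s ^+ 2)).
Proof.
move=> s0 m0 hu w0 hg.
set w := normv u in hu w0 *.
set a := mu / (s * w).
have a0 : 0 < a by rewrite /a divr_gt0 // mulr_gt0.
rewrite model_scale ger0_norm; last exact: ltW.
have h1 : a * dotv G u <= 0 by rewrite mulr_ge0_le0 // ltW.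
have h2 : a * (a * dotv (u *m H) u) <= a * (a * (- mu * w ^+ 2)).
  by do 2 (apply: ler_wpM2l; first exact: ltW); rewrite dotvC.
have -> : - (mu ^+ 3 / (6 * s ^+ 2)) = 2^-1 * (a * (a * (- mu * w ^+ 2))) + 3^-1 * s * (a * w) ^+ 3.
  by rewrite /a; field; rewrite !gt_eqF.
rewrite -/w; lra.
Qed.
End M.
Lemma step_cases (R : realType) (rt r : R) (P1 P2 : Prop) :
  (rt <= r -> P1) /\ (r < rt -> P2) -> P1 \/ P2.
Proof. by case=> h1 h2; case: (lerP rt r) => h; [left; apply: h1|right; apply: h2]. Qed.

Theorem lemma3p7 (R : realType) (d : nat) (M : Type) (n : nat)
  (fs : 'I_n -> M -> R) (retr : M -> 'rV[R]_d -> M)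
  (eps_g eps_H rho_TH gamma sigma0 nu L_H K_H delta_g delta_H : R)
  (x : nat -> M) (sigma : nat -> R) (G : nat -> 'rV[R]_d) (H : nat -> 'M[R]_d)
  (lam : nat -> R) (eta : nat -> 'rV[R]_d)
  (alphaC : nat -> R) (u : nat -> 'rV[R]_d) (alphaE : nat -> R) (N : nat) :
  (0 < n)%N -> (0 < d)%N ->
  (forall y, retr y 0 = y) ->
  (forall i y, C2 (fun v => fs i (retr y v))) ->
  0 < eps_g < 1 -> 0 < eps_H < 1 -> 0 < rho_TH < 1 -> 1 < gamma ->
  0 < sigma0 -> 0 < nu < 1 ->
  (* algorithm *)
  sigma 0%N = sigma0 ->
  (forall k, (k <= N)%N -> (H k)^T = H k /\ is_lambda_min (H k) (lam k)) ->
  (forall k, (k <= N)%N -> ~ (normv (G k) <= eps_g /\ - eps_H <= lam k)) ->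
  (forall k, (k <= N)%N ->
     let rho := (avg_fun fs (x k) - avg_fun fs (retr (x k) (eta k)))
                / (- cubic_model (G k) (H k) (sigma k) (eta k)) in
     (rho_TH <= rho -> x k.+1 = retr (x k) (eta k) /\ sigma k.+1 = sigma k / gamma) /\
     (rho < rho_TH -> x k.+1 = x k /\ sigma k.+1 = gamma * sigma k)) ->
  (* Cauchy point and eigenpoint *)
  (forall k, (k <= N)%N ->
     is_argmin_nonneg (fun a => cubic_model (G k) (H k) (sigma k) (- (a *: G k)))
                      (alphaC k)) ->
  (forall k, (k <= N)%N -> lam k < 0 ->
     [/\ dotv (u k) (u k *m H k) <= nu * lam k * normv (u k) ^+ 2,
         nu * lam k * normv (u k) ^+ 2 < 0,
         dotv (G k) (u k) <= 0 &
         is_argmin_nonneg (fun a => cubic_model (G k) (H k) (sigma k) (a *: u k))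
                          (alphaE k)]) ->
  (* (A1) *)
  0 < L_H ->
  (forall k, (k <= N)%N ->
     `| avg_fun fs (retr (x k) (eta k)) - avg_fun fs (x k)
        - dotv (rgrad (avg_fun fs) retr (x k)) (eta k)
        - 2^-1 * dotv (eta k *m rhess (avg_fun fs) retr (x k)) (eta k) |
     <= 2^-1 * L_H * normv (eta k) ^+ 3) ->
  (* (A2) *)
  0 < K_H ->
  (forall k, (k <= N)%N -> forall e : 'rV[R]_d,
     normv e <= 1 -> dotv e (e *m H k) <= K_H) ->
  (* (A3) *)
  0 < delta_g < 1 -> 0 < delta_H < 1 ->
  (forall k, (k <= N)%N ->
     normv (G k - rgrad (avg_fun fs) retr (x k)) <= delta_g /\
     normv (eta k *m (H k - rhess (avg_fun fs) retr (x k))) <= delta_H * normv (eta k)) ->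
  (* (A4) *)
  (forall k, (k <= N)%N ->
     - cubic_model (G k) (H k) (sigma k) (eta k)
       >= - cubic_model (G k) (H k) (sigma k) (- (alphaC k *: G k)) /\
     (lam k < 0 ->
       - cubic_model (G k) (H k) (sigma k) (eta k)
         >= - cubic_model (G k) (H k) (sigma k) (alphaE k *: u k))) ->
  (* parameter conditions *)
  (forall k, (k <= N)%N ->
     delta_g <= 9 * delta_H ^+ 2 / (4 * sigma k) /\
     delta_H <= Num.min
       (Num.min (18^-1) ((1 - rho_TH) / 9)
          * (Num.sqrt (K_H ^+ 2 + 4 * sigma k * eps_g) - K_H))
       (Num.min (9^-1) (2 * (1 - rho_TH) / 9) * nu * eps_H)) ->
  forall k, (1 <= k <= N)%N -> sigma k <= Num.max sigma0 (2 * gamma * L_H).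
Proof.
move=> n0 d0 hretr hC2 /andP[eg0 eg1] /andP[eH0 eH1] /andP[r0 r1] hgam hs0 /andP[nu0 nu1]
  hsig0 hHsym hnostop halg hcauchy heig hL hA1 hK hA2 /andP[dg0 dg1] /andP[dH0 dH1] hA3 hA4 hpar.
have succ : forall k, (k <= N)%N -> 0 < sigma k -> 2 * L_H <= sigma k ->
    sigma k.+1 = sigma k / gamma.
  move=> k hk sp hs.
  have [hg3 hH3] := hA3 k hk.
  have [pg pH] := hpar k hk.
  have herr := err_mat (sigma k) (hA1 k hk) hg3 hH3.
  have herr2 := err_bd sp dH0 (normv_ge0 (eta k)) pg hs.
  have [P [hP P0 hPd]] : exists P, [/\ P <= - cubic_model (G k) (H k) (sigma k) (eta k), 0 < P &
      16 * delta_H ^+ 3 / sigma k ^+ 2 <= (1 - rho_TH) * P].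
    have [hgt|hlam] : eps_g < normv (G k) \/ lam k < - eps_H.
      case: (lerP (normv (G k)) eps_g) => h; last by left.
      right; case: (ltrP (lam k) (- eps_H)) => // h'.
      by exfalso; apply: (hnostop k hk).
    - have [q0 hq] := qprops sp hK eg0.
      set q := Num.sqrt _ - K_H in q0 hq pH.
      have [a0 ha] := cauchy_mat sp hK eg0 (ltW hgt) q0 hq (hA2 k hk).
      have qp : 0 < q.
        rewrite lt_def q0 andbT; apply/eqP => qz; move: hq; rewrite qz expr0n /= mulr0 addr0 => hq.
        have : 0 < 4 * sigma k * eps_g by rewrite !mulr_gt0.
        by rewrite -hq ltxx.
      exists (q * eps_g / (4 * sigma k)); split.
      + have [hc _] := hA4 k hk.
        have [_ hc2] := hcauchy k hk.
        have := hc2 _ a0; rewrite /= => hc3.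
        lra.
      + by rewrite divr_gt0 ?mulr_gt0.
      + move: pH; rewrite le_min => /andP[pH1 _].
        exact: case1_delta sp hK eg0 (introT andP (conj r0 r1)) dH0 q0 hq pH1.
    - have lneg : lam k < 0 by lra.
      have [e1 e2 e3 e4] := heig k hk lneg.
      set mu := - (nu * lam k).
      have mup : 0 < mu by rewrite /mu oppr_gt0 pmulr_rlt0.
      have wp : 0 < normv (u k).
        rewrite lt_def normv_ge0 andbT; apply/eqP => wz; move: e2; rewrite wz expr0n /= mulr0.
        by rewrite ltxx.
      have hu : dotv (u k) (u k *m H k) <= - mu * normv (u k) ^+ 2 by rewrite /mu opprK.
      have hm := eig_mat (G := G k) sp mup hu wp e3.
      exists (mu ^+ 3 / (6 * sigma k ^+ 2)); split.
      + have [_ hc] := hA4 k hk.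
        have hc' := hc lneg.
        have [_ hc2] := e4.
        have a0 : 0 <= mu / (sigma k * normv (u k)) by rewrite divr_ge0 ?mulr_ge0 // ltW.
        have := hc2 _ a0; rewrite /= => hc3.
        lra.
      + by rewrite divr_gt0 ?exprn_gt0 ?mulr_gt0.
      + move: pH; rewrite le_min => /andP[_ pH2].
        have ne0 : 0 <= nu * eps_H by rewrite mulr_ge0 // ltW.
        have nem : nu * eps_H <= mu by rewrite /mu -mulrN; apply: ler_wpM2l; [exact: ltW | lra].
        exact: case2_delta sp (introT andP (conj r0 r1)) dH0 ne0 nem pH2.
  have [hm hrho] := core r1 herr herr2 hP P0 hPd.
  have := halg k hk; move=> /= [h1 _].
  apply: (h1 _).2.
  rewrite ler_pdivlMr //.
  move: hrho; congr (_ <= _); ring.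
have pos : forall k, (k <= N)%N -> 0 < sigma k.
  elim=> [|k IH] hk; first by rewrite hsig0.
  have hk' : (k <= N)%N by apply: ltnW.
  have sp := IH hk'.
  have g0 : 0 < gamma by lra.
  by have [[_ ->]|[_ ->]] := step_cases (halg k hk'); rewrite ?divr_gt0 ?mulr_gt0.
have bound : forall k, (k <= N)%N -> sigma k <= Num.max sigma0 (2 * gamma * L_H).
  elim=> [|k IH] hk; first by rewrite hsig0 le_max lexx.
  have hk' : (k <= N)%N by apply: ltnW.
  have sp := pos k hk'.
  have IH' := IH hk'.
  have g0 : 0 < gamma by lra.
  have hdiv : sigma k / gamma <= sigma k.
    rewrite ler_pdivrMr //; nra.
  case: (lerP (2 * L_H) (sigma k)) => hs.
    by rewrite succ //; exact: le_trans hdiv IH'.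
  have : sigma k.+1 <= gamma * sigma k.
    have [[_ ->]|[_ ->]] := step_cases (halg k hk') => //.
    nra.
  move=> h; rewrite le_max; apply/orP; right; nra.
move=> k /andP[_ hk]; exact: bound.
Qed.
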